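(* Let $\Theta\subseteq\mathbb{R}^p$ be open, $U_\theta$ a differentiable family of $D\times D$ unitary matrices, and $\rho_0=|\psi_0\rangle\langle\psi_0|$ a pure state on $\mathbb{C}^D$. For the unitary channel $\rho\mapsto U_\theta\rho U_\theta^\dagger$ with canonical Kraus operators $\Upsilon_1=U_\theta$, $\Upsilon_k=0$ ($k\ge2$), one has $H_\theta=C_\Upsilon(\theta)$ if and only if $\mathrm{tr}\{U_\theta\rho_0(\frac{\partial U_\theta}{\partial\theta^l})^\dagger\}=0$ for all $l=1,\dots,p$.
   Context: $C_\Upsilon(\theta)$ is the $p\times p$ matrix with entries $4\sum_l\mathrm{Re}\,\mathrm{tr}\{\frac{\partial\Upsilon_l}{\partial\theta^j}\rho_0(\frac{\partial\Upsilon_l}{\partial\theta^k})^\dagger\}$. $H_\theta$ is the SLD quantum information matrix of $\rho_\theta=U_\theta\rho_0U_\theta^\dagger$, with entries $\mathrm{Re}\,\mathrm{tr}\{\lambda^j\rho_\theta\lambda^k\}$, where $\lambda^j$ is a Hermitian solution of $\frac{\partial\rho_\theta}{\partial\theta^j}=\frac12(\rho_\theta\lambda^j+\lambda^j\rho_\theta)$. *)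

(* Defs.v *)
From HB Require Import structures.
From mathcomp Require Import all_boot all_order all_algebra.
From mathcomp Require Import all_classical all_reals all_analysis.
From mathcomp Require Import complex.
Set Implicit Arguments. Unset Strict Implicit. Unset Printing Implicit Defensive.
Import Order.TTheory GRing.Theory Num.Theory.
Import numFieldNormedType.Exports.
Local Open Scope ring_scope.

Notation Cx R := (complex R).

Definition adjmx (R : realType) m n (A : 'M[Cx R]_(m, n)) : 'M[Cx R]_(n, m) :=
  \matrix_(i, j) (A j i)^*%C.

Definition evec (R : realType) p (l : 'I_p) : 'rV[R]_p := delta_mx 0 l.

Definition pderiv (R : realType) p m n (F : 'rV[R]_p -> 'M[Cx R]_(m, n))
  (l : 'I_p) (th : 'rV[R]_p) : 'M[Cx R]_(m, n) :=
  \matrix_(i, j)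
    (Complex ('D_(@evec R p l) (fun t : 'rV[R]_p => complex.Re (F t i j)) th)
             ('D_(@evec R p l) (fun t : 'rV[R]_p => complex.Im (F t i j)) th)).

Definition mx_differentiable (R : realType) p m n
  (F : 'rV[R]_p -> 'M[Cx R]_(m, n)) (th : 'rV[R]_p) : Prop :=
  forall i j, differentiable (fun t : 'rV[R]_p => complex.Re (F t i j)) th /\
              differentiable (fun t : 'rV[R]_p => complex.Im (F t i j)) th.

Definition unitary_mx (R : realType) D (U : 'M[Cx R]_D) : Prop :=
  U *m adjmx U = 1%:M /\ adjmx U *m U = 1%:M.

Definition hermitian_mx (R : realType) D (A : 'M[Cx R]_D) : Prop :=
  adjmx A = A.

Definition pure_state (R : realType) D (rho0 : 'M[Cx R]_D) : Prop :=
  exists psi : 'cV[Cx R]_D, adjmx psi *m psi = 1%:M /\ rho0 = psi *m adjmx psi.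

Definition C_Ups (R : realType) p D K (Ups : 'I_K -> 'rV[R]_p -> 'M[Cx R]_D)
  (rho0 : 'M[Cx R]_D) (th : 'rV[R]_p) : 'M[R]_p :=
  \matrix_(j, k) (4 * \sum_(l < K)
     complex.Re (\tr (pderiv (Ups l) j th *m rho0 *m adjmx (pderiv (Ups l) k th)))).

Definition is_SLD_family (R : realType) p D (rho : 'rV[R]_p -> 'M[Cx R]_D)
  (th : 'rV[R]_p) (lam : 'I_p -> 'M[Cx R]_D) : Prop :=
  forall j, hermitian_mx (lam j) /\
    pderiv rho j th = (2%:R^-1)%:M *m (rho th *m lam j + lam j *m rho th).

Definition SLD_info (R : realType) p D (rho : 'rV[R]_p -> 'M[Cx R]_D)
  (th : 'rV[R]_p) (lam : 'I_p -> 'M[Cx R]_D) : 'M[R]_p :=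
  \matrix_(j, k) complex.Re (\tr (lam j *m rho th *m lam k)).

Definition unitary_kraus (R : realType) p D K (U : 'rV[R]_p -> 'M[Cx R]_D)
  : 'I_K.+1 -> 'rV[R]_p -> 'M[Cx R]_D :=
  fun k th => if k == ord0 then U th else 0.

(* Main.v *)
Require Import Defs.
From HB Require Import structures.
From mathcomp Require Import all_boot all_order all_algebra.
From mathcomp Require Import all_classical all_reals all_analysis.
From mathcomp Require Import complex ring lra.
Import Order.TTheory GRing.Theory Num.Theory.
Import numFieldNormedType.Exports.
Local Open Scope ring_scope.
Set Implicit Arguments. Unset Strict Implicit. Unset Printing Implicit Defensive.
Section S.
Variable R : realType.
Variable p : nat.
Implicit Types th : 'rV[R]_p.
Lemma ReD (x y : Cx R) : complex.Re (x + y) = complex.Re x + complex.Re y.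
Proof. by case: x; case: y. Qed.
Lemma ImD (x y : Cx R) : complex.Im (x + y) = complex.Im x + complex.Im y.
Proof. by case: x; case: y. Qed.
Lemma ReM (x y : Cx R) : complex.Re (x * y) = complex.Re x * complex.Re y - complex.Im x * complex.Im y.
Proof. by case: x; case: y. Qed.
Lemma ImM (x y : Cx R) : complex.Im (x * y) = complex.Re x * complex.Im y + complex.Im x * complex.Re y.
Proof. by case: x => a b; case: y => c d /=. Qed.
Lemma fmulE (f g : 'rV[R]_p -> R) : (fun t => f t * g t) = f * g.
Proof. by []. Qed.
Lemma fsumE n (h : 'I_n -> 'rV[R]_p -> R) : (fun t => \sum_(i < n) h i t) = \sum_(i < n) h i.
Proof. by apply/funext => t; rewrite fct_sumE. Qed.
Lemma complexE (z : Cx R) : z = Complex (complex.Re z) (complex.Im z).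
Proof. by case: z. Qed.

Definition mxder m n (F : 'rV[R]_p -> 'M[Cx R]_(m, n)) (l : 'I_p) th :=
  forall i j, derivable (fun t => complex.Re (F t i j)) th (@evec R p l) /\
              derivable (fun t => complex.Im (F t i j)) th (@evec R p l).

Lemma Re_sum n (h : 'I_n -> Cx R) : complex.Re (\sum_(i < n) h i) = \sum_(i < n) complex.Re (h i).
Proof. elim/big_ind2: _ => //= x a y b Ha Hb; by rewrite ReD Ha Hb. Qed.
Lemma Im_sum n (h : 'I_n -> Cx R) : complex.Im (\sum_(i < n) h i) = \sum_(i < n) complex.Im (h i).
Proof. elim/big_ind2: _ => //= x a y b Ha Hb; by rewrite ImD Ha Hb. Qed.

Lemma mxderM m n q (F : 'rV[R]_p -> 'M[Cx R]_(m, n)) (G : 'rV[R]_p -> 'M[Cx R]_(n, q)) l th :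
  mxder F l th -> mxder G l th -> mxder (fun t => F t *m G t) l th.
Proof.
move=> dF dG i j; split.
- have -> : (fun t => complex.Re ((F t *m G t) i j)) =
     \sum_(k < n) ((fun t => complex.Re (F t i k)) * (fun t => complex.Re (G t k j))
                  - (fun t => complex.Im (F t i k)) * (fun t => complex.Im (G t k j))).
    apply/funext => t; rewrite mxE Re_sum fct_sumE; apply: eq_bigr => k _.
    rewrite ReM; reflexivity.
  apply: derivable_sum => k; apply: derivableB; apply: derivableM.
  exact: (dF i k).1. exact: (dG k j).1. exact: (dF i k).2. exact: (dG k j).2.
- have -> : (fun t => complex.Im ((F t *m G t) i j)) =
     \sum_(k < n) ((fun t => complex.Re (F t i k)) * (fun t => complex.Im (G t k j))
                  + (fun t => complex.Im (F t i k)) * (fun t => complex.Re (G t k j))).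
    apply/funext => t; rewrite mxE Im_sum fct_sumE; apply: eq_bigr => k _.
    rewrite ImM; reflexivity.
  apply: derivable_sum => k; apply: derivableD; apply: derivableM.
  exact: (dF i k).1. exact: (dG k j).2. exact: (dF i k).2. exact: (dG k j).1.
Qed.

Lemma pderivM m n q (F : 'rV[R]_p -> 'M[Cx R]_(m, n)) (G : 'rV[R]_p -> 'M[Cx R]_(n, q)) l th :
  mxder F l th -> mxder G l th ->
  pderiv (fun t => F t *m G t) l th = pderiv F l th *m G th + F th *m pderiv G l th.
Proof.
move=> dF dG; apply/matrixP => i j.
set v := evec R l.
have E1 : (fun t => complex.Re ((F t *m G t) i j)) =
     \sum_(k < n) ((fun t => complex.Re (F t i k)) * (fun t => complex.Re (G t k j))
                  - (fun t => complex.Im (F t i k)) * (fun t => complex.Im (G t k j))).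
  apply/funext => t; rewrite mxE Re_sum fct_sumE; apply: eq_bigr => k _.
  rewrite ReM; reflexivity.
have E2 : (fun t => complex.Im ((F t *m G t) i j)) =
     \sum_(k < n) ((fun t => complex.Re (F t i k)) * (fun t => complex.Im (G t k j))
                  + (fun t => complex.Im (F t i k)) * (fun t => complex.Re (G t k j))).
  apply/funext => t; rewrite mxE Im_sum fct_sumE; apply: eq_bigr => k _.
  rewrite ImM; reflexivity.
have D1 : 'D_v (fun t => complex.Re ((F t *m G t) i j)) th =
  \sum_(k < n) (('D_v (fun t => complex.Re (F t i k)) th * complex.Re (G th k j)
     + complex.Re (F th i k) * 'D_v (fun t => complex.Re (G t k j)) th)
     - ('D_v (fun t => complex.Im (F t i k)) th * complex.Im (G th k j)
     + complex.Im (F th i k) * 'D_v (fun t => complex.Im (G t k j)) th)).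
  rewrite E1 derive_sum; last first.
    move=> k; apply: derivableB; apply: derivableM.
    exact: (dF i k).1. exact: (dG k j).1. exact: (dF i k).2. exact: (dG k j).2.
  apply: eq_bigr => k _.
  rewrite deriveB; last first.
    apply: derivableM. exact: (dF i k).2. exact: (dG k j).2.
    apply: derivableM. exact: (dF i k).1. exact: (dG k j).1.
  rewrite !deriveM; last 4 first.
    exact: (dF i k).2. exact: (dG k j).2. exact: (dF i k).1. exact: (dG k j).1.
  set a1 := 'D_v _ th; set a2 := 'D_v _ th; set a3 := 'D_v _ th; set a4 := 'D_v _ th.
  rewrite /GRing.scale /= ; ring.
have D2 : 'D_v (fun t => complex.Im ((F t *m G t) i j)) th =
  \sum_(k < n) (('D_v (fun t => complex.Re (F t i k)) th * complex.Im (G th k j)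
     + complex.Re (F th i k) * 'D_v (fun t => complex.Im (G t k j)) th)
     + ('D_v (fun t => complex.Im (F t i k)) th * complex.Re (G th k j)
     + complex.Im (F th i k) * 'D_v (fun t => complex.Re (G t k j)) th)).
  rewrite E2 derive_sum; last first.
    move=> k; apply: derivableD; apply: derivableM.
    exact: (dF i k).1. exact: (dG k j).2. exact: (dF i k).2. exact: (dG k j).1.
  apply: eq_bigr => k _.
  rewrite deriveD; last first.
    apply: derivableM. exact: (dF i k).2. exact: (dG k j).1.
    apply: derivableM. exact: (dF i k).1. exact: (dG k j).2.
  rewrite !deriveM; last 4 first.
    exact: (dF i k).2. exact: (dG k j).1. exact: (dF i k).1. exact: (dG k j).2.
  set a1 := 'D_v _ th; set a2 := 'D_v _ th; set a3 := 'D_v _ th; set a4 := 'D_v _ th.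
  rewrite /GRing.scale /=; ring.
rewrite [LHS]mxE D1 D2 [RHS]complexE; congr Complex.
- rewrite !mxE ReD !Re_sum -big_split /=; apply: eq_bigr => k _.
  rewrite !ReM !mxE /=; ring.
- rewrite !mxE ImD !Im_sum -big_split /=; apply: eq_bigr => k _.
  rewrite !ImM !mxE /=; ring.
Qed.

Lemma Re_conj (z : Cx R) : complex.Re (z^*)%C = complex.Re z. Proof. by case: z. Qed.
Lemma Im_conj (z : Cx R) : complex.Im (z^*)%C = - complex.Im z. Proof. by case: z. Qed.

Lemma mxder_adj m n (F : 'rV[R]_p -> 'M[Cx R]_(m, n)) l th :
  mxder F l th -> mxder (fun t => adjmx (F t)) l th.
Proof.
move=> dF i j; split.
- have -> : (fun t => complex.Re (adjmx (F t) i j)) = (fun t => complex.Re (F t j i)).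
    by apply/funext => t; rewrite mxE Re_conj.
  exact: (dF j i).1.
- have -> : (fun t => complex.Im (adjmx (F t) i j)) = - (fun t => complex.Im (F t j i)).
    by apply/funext => t; rewrite mxE Im_conj.
  apply: derivableN; exact: (dF j i).2.
Qed.

Lemma pderiv_adj m n (F : 'rV[R]_p -> 'M[Cx R]_(m, n)) l th :
  mxder F l th -> pderiv (fun t => adjmx (F t)) l th = adjmx (pderiv F l th).
Proof.
move=> dF; apply/matrixP => i j; rewrite !mxE.
have -> : (fun t => complex.Re (adjmx (F t) i j)) = (fun t => complex.Re (F t j i)).
  by apply/funext => t; rewrite mxE Re_conj.
have -> : (fun t => complex.Im (adjmx (F t) i j)) = - (fun t => complex.Im (F t j i)).
  by apply/funext => t; rewrite mxE Im_conj.
rewrite deriveN; last exact: (dF j i).2.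
by [].
Qed.

Lemma mxder_cst m n (C : 'M[Cx R]_(m, n)) l th : mxder (fun _ => C) l th.
Proof. move=> i j; split; exact: derivable_cst. Qed.

Lemma pderiv_cst m n (C : 'M[Cx R]_(m, n)) l th : pderiv (fun _ => C) l th = 0.
Proof.
apply/matrixP => i j; rewrite !mxE.
have -> : 'D_(@evec R p l) (fun _ : 'rV[R]_p => complex.Re (C i j)) th = 0.
  exact: (derive_cst (complex.Re (C i j))).
have -> : 'D_(@evec R p l) (fun _ : 'rV[R]_p => complex.Im (C i j)) th = 0.
  exact: (derive_cst (complex.Im (C i j))).
by [].
Qed.

Lemma pderiv_near m n (F G : 'rV[R]_p -> 'M[Cx R]_(m, n)) l th :
  (\forall t \near th, F t = G t) -> pderiv F l th = pderiv G l th.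
Proof.
move=> FG; apply/matrixP => i j; rewrite !mxE.
congr Complex; apply: near_eq_derive; apply: filterS FG => t ->; reflexivity.
Qed.

Lemma mxder_diff m n (F : 'rV[R]_p -> 'M[Cx R]_(m, n)) l th :
  mx_differentiable F th -> mxder F l th.
Proof. by move=> dF i j; case: (dF i j) => a b; split; apply: diff_derivable. Qed.
End S.

Section Alg.
Variable R : realType.
Local Notation "x ^*" := (conjc x) : ring_scope.

Lemma adjmxM m n q (A : 'M[Cx R]_(m, n)) (B : 'M[Cx R]_(n, q)) :
  adjmx (A *m B) = adjmx B *m adjmx A.
Proof.
apply/matrixP => i j; rewrite !mxE rmorph_sum; apply: eq_bigr => k _.
by rewrite !mxE rmorphM mulrC.
Qed.
Lemma adjmxK m n (A : 'M[Cx R]_(m, n)) : adjmx (adjmx A) = A.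
Proof. by apply/matrixP => i j; rewrite !mxE conjcK. Qed.
Lemma adjmxD m n (A B : 'M[Cx R]_(m, n)) : adjmx (A + B) = adjmx A + adjmx B.
Proof. by apply/matrixP => i j; rewrite !mxE rmorphD. Qed.
Lemma adjmxN m n (A : 'M[Cx R]_(m, n)) : adjmx (- A) = - adjmx A.
Proof. by apply/matrixP => i j; rewrite !mxE rmorphN. Qed.
Lemma adjmxB m n (A B : 'M[Cx R]_(m, n)) : adjmx (A - B) = adjmx A - adjmx B.
Proof. by rewrite adjmxD adjmxN. Qed.
Lemma adjmx0 m n : adjmx (0 : 'M[Cx R]_(m, n)) = 0.
Proof. by apply/matrixP => i j; rewrite !mxE rmorph0. Qed.
Lemma adjmxZ m n c (A : 'M[Cx R]_(m, n)) : adjmx (c *: A) = c^* *: adjmx A.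
Proof. by apply/matrixP => i j; rewrite !mxE rmorphM. Qed.
Lemma adjmx_scalar n c : adjmx (c%:M : 'M[Cx R]_n) = (c^*)%:M.
Proof.
by apply/matrixP => i j; rewrite !mxE rmorphMn eq_sym.
Qed.
Lemma tr_adjmx n (A : 'M[Cx R]_n) : \tr (adjmx A) = (\tr A)^*.
Proof. by rewrite /mxtrace rmorph_sum; apply: eq_bigr => i _; rewrite mxE. Qed.

Lemma ReDc (x y : Cx R) : complex.Re (x + y) = complex.Re x + complex.Re y.
Proof. by case: x; case: y. Qed.

Lemma Re_natM n (z : Cx R) : complex.Re (n%:R * z) = n%:R * complex.Re z.
Proof.
elim: n => [|n IH]; first by rewrite !mul0r.
by rewrite -addn1 !natrD !mulrDl ReDc IH !mul1r.
Qed.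

Lemma tr11 (A : 'M[Cx R]_1) : \tr A = A 0 0.
Proof. by rewrite {1}[A]mx11_scalar mxtrace_scalar mulr1n. Qed.

Lemma alg D p (V : 'M[Cx R]_D) (psi : 'cV[Cx R]_D) (d lam X : 'I_p -> 'M[Cx R]_D) :
  adjmx V *m V = 1%:M -> adjmx psi *m psi = 1%:M ->
  (forall l, adjmx (d l) *m V + adjmx V *m d l = 0) ->
  (forall l, hermitian_mx (lam l) /\
     X l = (2%:R^-1)%:M *m (V *m (psi *m adjmx psi) *m adjmx V *m lam l
                            + lam l *m (V *m (psi *m adjmx psi) *m adjmx V))) ->
  (forall l, X l = d l *m (psi *m adjmx psi) *m adjmx V
                   + V *m (psi *m adjmx psi) *m adjmx (d l)) ->
  let al := fun l => (adjmx (V *m psi) *m (d l *m psi)) 0 0 in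
  [/\ forall j k, complex.Re (\tr (lam j *m (V *m (psi *m adjmx psi) *m adjmx V) *m lam k))
        = 4%:R * complex.Re (\tr (d j *m (psi *m adjmx psi) *m adjmx (d k)))
          + 4%:R * complex.Re (al k * al j),
      forall l, \tr (V *m (psi *m adjmx psi) *m adjmx (d l)) = (al l)^* &
      forall l, (al l)^* = - al l].
Proof.
move=> HV hpsi Hz Hsld HX al.
set ps := V *m psi.
set g := fun l => d l *m psi.
set a := fun l => adjmx ps *m g l.
have N1 : adjmx ps *m ps = 1%:M.
  by rewrite /ps adjmxM -mulmxA (mulmxA (adjmx V)) HV mul1mx hpsi.
have rhoE : V *m (psi *m adjmx psi) *m adjmx V = ps *m adjmx ps.
  by rewrite /ps adjmxM !mulmxA.
have aE : forall l, a l = (al l)%:M by move=> l; rewrite {1}[a l]mx11_scalar.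
have A1 : forall l, adjmx (a l) = - a l.
  move=> l.
  have -> : adjmx (a l) = adjmx psi *m (adjmx (d l) *m V) *m psi.
    by rewrite /a /g /ps /= !adjmxM !adjmxK !mulmxA.
  have -> : a l = adjmx psi *m (adjmx V *m d l) *m psi.
    by rewrite /a /g /ps /= adjmxM !mulmxA.
  apply/eqP; rewrite -addr_eq0; apply/eqP.
  by rewrite -mulmxDl -mulmxDr Hz mulmx0 mul0mx.
have XE : forall l, X l = g l *m adjmx ps + ps *m adjmx (g l).
  by move=> l; rewrite HX /g /ps !adjmxM !mulmxA.
have Ag : forall l, adjmx ps *m g l = a l by [].
have T1 : forall j k, \tr (d j *m (psi *m adjmx psi) *m adjmx (d k)) = \tr (adjmx (g k) *m g j).
  by move=> j k; rewrite [RHS]mxtrace_mulC /g /= adjmxM !mulmxA.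
have T2 : forall l, \tr (V *m (psi *m adjmx psi) *m adjmx (d l)) = \tr (adjmx (g l) *m ps).
  by move=> l; rewrite [RHS]mxtrace_mulC /g /ps /= adjmxM !mulmxA.
have T3 : forall l, al l = \tr (a l) by move=> l; rewrite aE mxtrace_scalar mulr1n.
clearbody al.
clearbody a g ps.
have Ga : forall l, adjmx (g l) *m ps = - a l.
  by move=> l; rewrite -A1 -Ag adjmxM adjmxK.
have two0 : (2%:R : Cx R) != 0 by rewrite pnatr_eq0.
have S2 : forall l, X l = 2%:R^-1 *: (ps *m adjmx ps *m lam l + lam l *m (ps *m adjmx ps)).
  by move=> l; rewrite (Hsld l).2 rhoE mul_scalar_mx.
have C0 : forall l, adjmx ps *m lam l *m ps = 0.
  move=> l.
  have E1 : adjmx ps *m X l *m ps = a l + adjmx (a l).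
    rewrite XE mulmxDr mulmxDl -!mulmxA N1 mulmx1 !mulmxA N1 mul1mx.
    by rewrite Ga Ag A1.
  have E2 : adjmx ps *m X l *m ps = adjmx ps *m lam l *m ps.
    rewrite S2 -scalemxAr -scalemxAl mulmxDr mulmxDl.
    rewrite !mulmxA N1 mul1mx -!mulmxA N1 mulmx1 !mulmxA.
    set c := adjmx ps *m lam l *m ps.
    have h2 : (2%:R^-1 + 2%:R^-1 : Cx R) = 1 by field.
    by rewrite scalerDr -scalerDl h2 scale1r.
  by rewrite -E2 E1 A1 addrN.
have W : forall l, lam l *m ps = 2%:R *: (g l - ps *m a l).
  move=> l.
  have E1 : X l *m ps = g l - ps *m a l.
    rewrite XE mulmxDl -!mulmxA N1 mulmx1 Ga.
    by rewrite mulmxN.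
  have E2 : X l *m ps = 2%:R^-1 *: (lam l *m ps).
    rewrite S2 -scalemxAl mulmxDl -!mulmxA N1 mulmx1 (mulmxA (adjmx ps)) C0 mulmx0 add0r.
    by [].
  by rewrite -E1 E2 scalerA mulfV // scale1r.
have Hc : forall l, (al l)^* = - al l.
  by move=> l; rewrite T3 -tr_adjmx A1 raddfN.
split=> [j k|l|l]; [rewrite rhoE T1 | rewrite T2 | exact: Hc].
- rewrite !mulmxA -(mulmxA (lam j *m ps)) mxtrace_mulC.
  have Hk : adjmx ps *m lam k = adjmx (lam k *m ps).
    by rewrite adjmxM (Hsld k).1.
  rewrite Hk !W !aE !mul_mx_scalar adjmxZ adjmxB adjmxZ Hc rmorph_nat.
  rewrite -scalemxAl -scalemxAr mulmxBl !mulmxBr -!scalemxAl -!scalemxAr.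
  rewrite Ga Ag N1 !aE.
  set G := adjmx (g k) *m g j.
  rewrite !tr11 !mxE !eqxx /= !mulr1n.
  rewrite -!Re_natM -ReDc; congr complex.Re; ring.
- by rewrite Ga -A1 tr_adjmx T3.
Qed.
End Alg.


Lemma imag_sq0 (R : realType) (z : Cx R) : (z^*)%C = - z -> complex.Re (z * z) = 0 -> z = 0.
Proof.
case: z => x y /(congr1 (@complex.Re R)) /= hx /eqP.
have x0 : x = 0.
  by lra.
rewrite x0 mul0r sub0r oppr_eq0 mulf_eq0 orbb => /eqP y0.
by rewrite y0.
Qed.

Unset Implicit Arguments.
Local Open Scope classical_set_scope.

Theorem lemma2p11 (R : realType) (p D K : nat) (Theta : set 'rV[R]_p)
  (U : 'rV[R]_p -> 'M[Cx R]_D) (rho0 : 'M[Cx R]_D) :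
  open Theta ->
  (forall t, Theta t -> unitary_mx (U t)) ->
  (forall t, Theta t -> mx_differentiable U t) ->
  pure_state rho0 ->
  forall th, Theta th ->
  forall lam : 'I_p -> 'M[Cx R]_D,
    is_SLD_family (fun t => U t *m rho0 *m adjmx (U t)) th lam ->
    (SLD_info (fun t => U t *m rho0 *m adjmx (U t)) th lam
       = C_Ups (@unitary_kraus R p D K U) rho0 th
     <-> forall l : 'I_p, \tr (U th *m rho0 *m adjmx (pderiv U l th)) = 0).
Proof.
move=> HO HU Hd [psi [hpsi ->]] th Hth lam Hsld.
have nT : \forall t \near th, Theta t.
  exact: (HO th Hth).
set V := U th.
have dU : forall l, mxder U l th := fun l => mxder_diff l (Hd th Hth).
set d := fun l => pderiv U l th.
have Hzero : forall l, adjmx (d l) *m V + adjmx V *m d l = 0.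
  move=> l.
  have := pderiv_near l (F := fun t => adjmx (U t) *m U t) (G := fun _ => 1%:M) (th := th).
  rewrite pderiv_cst pderivM; last 2 first.
  - exact: mxder_adj.
  - exact: dU.
  rewrite pderiv_adj //; apply.
  by apply: filterS nT => t /HU [].
have HX : forall l, pderiv (fun t => U t *m (psi *m adjmx psi) *m adjmx (U t)) l th
   = d l *m (psi *m adjmx psi) *m adjmx V + V *m (psi *m adjmx psi) *m adjmx (d l).
  move=> l; rewrite pderivM; last 2 first.
  - apply: mxderM; [exact: dU | exact: mxder_cst].
  - exact: mxder_adj.
  rewrite (pderivM (dU l) (mxder_cst (psi *m adjmx psi) l th)).
  by rewrite pderiv_cst mulmx0 addr0 pderiv_adj.
have HV : adjmx V *m V = 1%:M by case: (HU th Hth).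
have [H1 H2 H3] := @alg R D p V psi d lam
  (fun l => pderiv (fun t => U t *m (psi *m adjmx psi) *m adjmx (U t)) l th)
  HV hpsi Hzero Hsld HX.
have UK0 : @unitary_kraus R p D K U ord0 = U.
  by apply/funext => t; rewrite /unitary_kraus eqxx.
have UKS : forall i, @unitary_kraus R p D K U (lift ord0 i) = fun _ => 0.
  by move=> i; apply/funext => t; rewrite /unitary_kraus eq_sym (negbTE (neq_lift _ _)).
have HC : forall j k, C_Ups (@unitary_kraus R p D K U) (psi *m adjmx psi) th j k
   = 4%:R * complex.Re (\tr (d j *m (psi *m adjmx psi) *m adjmx (d k))).
  move=> j k; rewrite mxE big_ord_recl UK0 big1 ?addr0 //.
  by move=> i _; rewrite UKS pderiv_cst !mul0mx mxtrace0.
have HS : forall j k, SLD_info (fun t => U t *m (psi *m adjmx psi) *m adjmx (U t)) th lam j k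
   = complex.Re (\tr (lam j *m (V *m (psi *m adjmx psi) *m adjmx V) *m lam k)).
  by move=> j k; rewrite mxE.
split.
- move=> Heq l; rewrite -/(d l) H2.
  move/matrixP: Heq => /(_ l l); rewrite HS HC H1.
  move/eqP; rewrite -subr_eq0 addrC addKr mulf_eq0 pnatr_eq0 /= => /eqP hr.
  by rewrite (imag_sq0 (H3 l) hr) rmorph0.
- move=> H; have a0 : forall l, (adjmx (V *m psi) *m (d l *m psi)) 0 0 = 0.
    move=> l; have := H l; rewrite -/(d l) H2 => /eqP; rewrite conjc_eq0 => /eqP.
    by [].
  apply/matrixP => j k; rewrite HS HC H1 a0 mul0r.
  by rewrite /= mulr0 addr0.

Qed.
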